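(* Let $G$ be a graph and $M$ a bipartizing matching of $G$. Then: (i) for every diamond subgraph $D$ of $G$, both vertices of degree $3$ in $D$ are covered by $M$; (ii) for every $v\in V(G)$, the graph $G[N_G(v)]$ does not contain two vertex-disjoint paths on $3$ vertices (as subgraphs); (iii) $G$ does not contain the wheel $W_k$ as a subgraph for any $k\ge 4$; (iv) $G$ does not contain an odd $k$-pool as a subgraph for any odd $k\ge 3$.
   Context: A matching $M\subseteq E(G)$ is a bipartizing matching of $G$ if $(V(G),E(G)\setminus M)$ is bipartite. A diamond is $K_4$ minus one edge. For $k\ge 3$, the wheel $W_k$ is the graph obtained from a cycle $C_k$ by adding a vertex adjacent to all cycle vertices. For $k\ge 3$, a $k$-pool is the graph with vertices $p_1,\dots,p_k,b_1,\dots,b_k$ whose edges are the cycle $p_1p_2\cdots p_kp_1$ and, for each $i$ (indices mod $k$), the edges $b_ip_i$ and $b_ip_{i+1}$; it is odd if $k$ is odd. *)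

(* Defs.v *)
From mathcomp Require Import all_boot.
Set Implicit Arguments. Unset Strict Implicit. Unset Printing Implicit Defensive.

Definition simple_graph (T : finType) (e : rel T) : Prop :=
  symmetric e /\ irreflexive e.

Definition contains (H : finType) (eH : rel H) (T : finType) (e : rel T) : Prop :=
  exists f : H -> T, injective f /\ forall x y, eH x y -> e (f x) (f y).

Definition matching (T : finType) (e M : rel T) : Prop :=
  [/\ forall x y, M x y -> e x y, symmetric M &
      forall x y z, M x y -> M x z -> y = z].

Definition bipartite_minus (T : finType) (e M : rel T) : Prop :=
  exists c : T -> bool, forall x y, e x y -> ~~ M x y -> c x != c y.

Definition bipartizing_matching (T : finType) (e M : rel T) : Prop :=
  matching e M /\ bipartite_minus e M.

Definition covered (T : finType) (M : rel T) (v : T) : Prop := exists u, M v u.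

(* Diamond on 'I_4: K4 minus the edge {0,3}; vertices 1 and 2 have degree 3. *)
Definition diamond_rel : rel 'I_4 :=
  fun i j => (i != j) && ~~ (((i : nat) == 0) && ((j : nat) == 3)
                          || ((i : nat) == 3) && ((j : nat) == 0)).
Definition d1 : 'I_4 := @Ordinal 4 1 isT.
Definition d2 : 'I_4 := @Ordinal 4 2 isT.

Definition cyc_rel (k : nat) : rel 'I_k :=
  fun i j => ((j : nat) == i.+1 %% k) || ((i : nat) == j.+1 %% k).

Definition wheel_rel (k : nat) : rel (option 'I_k) :=
  fun x y => match x, y with
             | Some i, Some j => cyc_rel i j
             | None, Some _ | Some _, None => true
             | None, None => false
             end.

(* k-pool: inl i = p_(i+1), inr i = b_(i+1); cycle on the p's and
   b_i adjacent to p_i and p_(i+1) (indices mod k). *)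
Definition pool_rel (k : nat) : rel ('I_k + 'I_k) :=
  fun x y => match x, y with
             | inl i, inl j => cyc_rel i j
             | inr i, inl j | inl j, inr i =>
                 ((j : nat) == i) || ((j : nat) == i.+1 %% k)
             | inr _, inr _ => false
             end.

Definition p3_rel : rel 'I_3 :=
  fun i j => ((j : nat) == i.+1) || ((i : nat) == j.+1).

Definition twoP3_rel : rel ('I_3 + 'I_3) :=
  fun x y => match x, y with
             | inl i, inl j => p3_rel i j
             | inr i, inr j => p3_rel i j
             | _, _ => false
             end.

Definition nbhd (T : finType) (e : rel T) (v : T) := {x : T | e v x}.
Definition nbhd_rel (T : finType) (e : rel T) (v : T) : rel (nbhd e v) :=
  fun x y => e (val x) (val y).

(* Main.v *)
Require Import Defs.
From mathcomp Require Import all_boot.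
From mathcomp Require Import zify.

Set Implicit Arguments.
Section Aux.
Variable k : nat.

Lemma val_iter (i : 'I_k) n : val (iter n (@ordS k) i) = (i + n) %% k.
Proof.
elim: n => [|n IH] /=; first by rewrite addn0 modn_small.
by rewrite IH -addn1 modnDml addn1 addnS.
Qed.

Lemma iter_neq (i : 'I_k) n : 0 < n < k -> iter n (@ordS k) i != i.
Proof.
move=> /andP [n0 nk]; apply/negP => /eqP/(congr1 val).
rewrite val_iter => H.
have : (i + n == i + 0 %[mod k]) by rewrite addn0 H modn_small.
by rewrite eqn_modDl mod0n modn_small // eqn0Ngt n0.
Qed.

Lemma iter_k (i : 'I_k) : iter k (@ordS k) i = i.
Proof. by apply: val_inj; rewrite val_iter modnDr modn_small. Qed.

Lemma iter_all (i j : 'I_k) : exists n, iter n (@ordS k) i = j.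
Proof.
exists (j + k - i); apply: val_inj; rewrite val_iter.
have ik := ltn_ord i.
have -> : i + (j + k - i) = j + k.
  by rewrite subnKC // (leq_trans (ltnW ik)) // leq_addl.
by rewrite modnDr modn_small.
Qed.

Lemma cyc_ordS (i : 'I_k) : cyc_rel i (ordS i).
Proof. by rewrite /cyc_rel /= eqxx. Qed.

End Aux.

Section Main.
Variables (T : finType) (e M : rel T).
Hypothesis esym : symmetric e.
Hypothesis Msym : symmetric M.
Hypothesis Muniq : forall x y z, M x y -> M x z -> y = z.
Variable c : T -> bool.
Hypothesis hc : forall x y, e x y -> ~~ M x y -> c x != c y.

Lemma tri x y z : e x y -> e y z -> e x z -> M x y \/ M y z \/ M x z.
Proof.
move=> exy eyz exz.
case Mxy: (M x y); first by left.
case Myz: (M y z); first by right; left.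
case Mxz: (M x z); first by right; right.
have := hc exy (negbT Mxy); have := hc eyz (negbT Myz); have := hc exz (negbT Mxz).
by case: (c x); case: (c y); case: (c z).
Qed.

Lemma p3 v a b d : e v a -> e v b -> e v d -> e a b -> e b d -> a != d ->
  M v a \/ M v b \/ M v d.
Proof.
move=> eva evb evd eab ebd ad.
case: (tri eva eab evb) => [|[Mab|]]; [by left| |by right; left].
case: (tri evb ebd evd) => [|[Mbd|]]; [by right; left| |by right; right].
rewrite Msym in Mab; by rewrite (Muniq Mab Mbd) eqxx in ad.
Qed.

End Main.

Unset Implicit Arguments.
Theorem lemma1 (T : finType) (e M : rel T) :
  simple_graph e -> bipartizing_matching e M ->
  [/\ (forall f : 'I_4 -> T, injective f ->
         (forall x y, diamond_rel x y -> e (f x) (f y)) ->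
         covered M (f d1) /\ covered M (f d2)),
      (forall v : T, ~ contains twoP3_rel (@nbhd_rel T e v)),
      (forall k, 4 <= k -> ~ contains (@wheel_rel k) e) &
      (forall k, 3 <= k -> odd k -> ~ contains (@pool_rel k) e)].
Proof.
move=> [esym eirr] [[Me Msym Muniq] [c hc]].
have tri' := @tri T e M c hc.
split.
- move=> f finj fe.
  pose d0 : 'I_4 := @Ordinal 4 0 isT.
  pose d3 : 'I_4 := @Ordinal 4 3 isT.
  have e01 := fe d0 d1 isT; have e02 := fe d0 d2 isT; have e12 := fe d1 d2 isT.
  have e13 := fe d1 d3 isT; have e23 := fe d2 d3 isT.
  have n03 : f d0 <> f d3 by move/finj.
  case: (tri' _ _ _ e01 e12 e02) => [M01|[M12|M02]].
  + split; first by exists (f d0); rewrite Msym.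
    case: (tri' _ _ _ e12 e23 e13) => [M12|[M23|M13]].
    * by exists (f d1); rewrite Msym.
    * by exists (f d3).
    * by rewrite Msym in M01; case: n03; apply: Muniq M01 M13.
  + by split; [exists (f d2) | exists (f d1); rewrite Msym].
  + split; last by exists (f d0); rewrite Msym.
    case: (tri' _ _ _ e12 e23 e13) => [M12|[M23|M13]].
    * by exists (f d2).
    * by rewrite Msym in M02; case: n03; apply: Muniq M02 M23.
    * by exists (f d3).
- move=> v [f [finj fe]].
  pose o0 : 'I_3 := @Ordinal 3 0 isT.
  pose o1 : 'I_3 := @Ordinal 3 1 isT.
  pose o2 : 'I_3 := @Ordinal 3 2 isT.
  pose g x := val (f x).
  have ginj : injective g by move=> x y /val_inj /finj.
  have gv x : e v (g x) by rewrite /g; case: (f x).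
  have side : forall s : 'I_3 -> 'I_3 + 'I_3, injective s ->
      (forall x y, p3_rel x y -> twoP3_rel (s x) (s y)) ->
      exists x, M v (g (s x)).
    move=> s sinj sr.
    have ge x y : p3_rel x y -> e (g (s x)) (g (s y)) by move=> /sr /fe.
    have n02 : g (s o0) != g (s o2) by apply/negP => /eqP /ginj /sinj.
    case: (@p3 T e M Msym Muniq c hc _ _ _ _ (gv _) (gv _) (gv _) (ge o0 o1 isT) (ge o1 o2 isT) n02)
      => [H|[H|H]]; by eexists; exact H.
  have [x Hx] := side inl (fun _ _ h => ltac:(by case: h)) (fun _ _ h => h).
  have [y Hy] := side inr (fun _ _ h => ltac:(by case: h)) (fun _ _ h => h).
  by have := ginj _ _ (Muniq _ _ _ Hx Hy).
- move=> k k4 [f [finj fe]].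
  have k0 : 0 < k by lia.
  pose h := f None; pose w i := f (Some i).
  have winj : injective w by move=> x y /finj [].
  have ehw i : e h (w i) by apply: (fe None (Some i)).
  have eww i : e (w i) (w (ordS i)) := fe (Some i) (Some (ordS i)) (cyc_ordS i).
  have Tr i : M h (w i) \/ M (w i) (w (ordS i)) \/ M h (w (ordS i))
    := tri' _ _ _ (ehw i) (eww i) (ehw (ordS i)).
  have [j Hj] : exists j : 'I_k, forall n, 0 < n < k -> ~~ M h (w (iter n (@ordS k) j)).
    case: (pickP (fun j => M h (w j))) => [j0 Hj0|none].
    + exists j0 => n nk; apply/negP => Hm; move: (Muniq _ _ _ Hm Hj0) => /winj /eqP.
      by rewrite (negbTE (iter_neq _ _ nk)).
    + by exists (Ordinal k0) => n _; rewrite none.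
  have h1 : 0 < 1 < k by lia.
  have h2 : 0 < 2 < k by lia.
  have h3 : 0 < 3 < k by lia.
  have M12 : M (w (iter 1 (@ordS k) j)) (w (iter 2 (@ordS k) j)).
    case: (Tr (iter 1 (@ordS k) j)) => [H|[H|H]] //.
    - by move: (Hj 1 h1); rewrite H.
    - by move: (Hj 2 h2); rewrite H.
  have M23 : M (w (iter 2 (@ordS k) j)) (w (iter 3 (@ordS k) j)).
    case: (Tr (iter 2 (@ordS k) j)) => [H|[H|H]] //.
    - by move: (Hj 2 h2); rewrite H.
    - by move: (Hj 3 h3); rewrite H.
  rewrite Msym in M12.
  move: (Muniq _ _ _ M12 M23) => /winj /eqP.
  have : 0 < 2 < k by lia.
  move/(iter_neq (iter 1 (@ordS k) j) _).
  by rewrite eq_sym => /negbTE ->.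
- move=> k k3 ko [f [finj fe]].
  have k0 : 0 < k by lia.
  pose p i := f (inl i); pose b i := f (inr i).
  have epp i : e (p i) (p (ordS i)) := fe (inl i) (inl (ordS i)) (cyc_ordS i).
  have ebp i : e (b i) (p i) by apply: (fe (inr i) (inl i)); rewrite /pool_rel eqxx.
  have ebp' i : e (b i) (p (ordS i)).
    by apply: (fe (inr i) (inl (ordS i))); rewrite /pool_rel /= eqxx orbT.
  have Tr i : M (b i) (p i) \/ M (p i) (p (ordS i)) \/ M (b i) (p (ordS i))
    := tri' _ _ _ (ebp i) (epp i) (ebp' i).
  have [i Mi] : exists i, M (p i) (p (ordS i)).
    case: (pickP (fun i => M (p i) (p (ordS i)))) => [i Hi|none]; first by exists i.
    exfalso.
    pose o0 : 'I_k := Ordinal k0.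
    have col n : c (p (iter n (@ordS k) o0)) = c (p o0) (+) odd n.
      elim: n => [|n IH]; first by rewrite addbF.
      have := hc _ _ (epp (iter n (@ordS k) o0)) (negbT (none _)).
      rewrite /= addbN -IH.
      by case: (c (p (iter n (@ordS k) o0))); case: (c (p (ordS (iter n (@ordS k) o0)))).
    have := col k; rewrite iter_k ko.
    by case: (c (p o0)).
  have step j : M (b j) (p (ordS j)) -> M (b (ordS j)) (p (ordS (ordS j))).
    move=> Qj; case: (Tr (ordS j)) => [H|[H|H]] //.
    - rewrite Msym in H; rewrite Msym in Qj.
      move: (Muniq _ _ _ H Qj) => /finj [] /eqP.
      have : 0 < 1 < k by lia.
      by move/(iter_neq j _) => /negbTE /= ->.
    - rewrite Msym in Qj.
      by move: (Muniq _ _ _ H Qj) => /finj.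
  have base : M (b (ordS i)) (p (ordS (ordS i))).
    case: (Tr (ordS i)) => [H|[H|H]] //.
    - rewrite Msym in Mi; rewrite Msym in H.
      by move: (Muniq _ _ _ Mi H) => /finj.
    - rewrite Msym in Mi.
      move: (Muniq _ _ _ H Mi) => /finj [] /eqP.
      have : 0 < 2 < k by lia.
      by move/(iter_neq i _) => /negbTE /= ->.
  have allQ j : M (b j) (p (ordS j)).
    have [n <-] := iter_all (ordS i) j.
    by elim: n => [|n IH] //=; apply: step.
  pose m := iter (k - 1) (@ordS k) i.
  have mi : ordS m = i.
    change (iter (k - 1).+1 (@ordS k) i = i).
    by rewrite subn1 prednK // iter_k.
  have := allQ m; rewrite mi Msym => H.
  by move: (Muniq _ _ _ H Mi) => /finj.
Qed.
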